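(* Let $L$ be an ideal lattice and let $f\colon(X,\sigma)\to(X',\sigma')$ be a morphism of support data on $L$, i.e. a continuous map $f\colon X\to X'$ with $\sigma(a)=f^{-1}(\sigma'(a))$ for all compact $a\in L$. If both $(X,\sigma)$ and $(X',\sigma')$ are classifying, then $f$ is a homeomorphism.
   Context: An ideal lattice is a poset $(L,\leq)$ with an associative multiplication such that: (L1) $L$ is a complete lattice; (L2) every element is a supremum of compact elements ($a$ is compact if $a\leq\sup A$ implies $a\leq\sup A'$ for some finite $A'\subseteq A$); (L3) multiplication distributes over binary joins on both sides; (L4) $1=\sup L$ is compact and is a two-sided identity; (L5) products of compact elements are compact. Semi-prime: $bb\leq a\Rightarrow b\leq a$. A support datum on $L$ is a pair $(X,\sigma)$ with $X$ a topological space and $\sigma$ assigning to each compact $a$ a closed subset $\sigma(a)\subseteq X$ with $\sigma(a\vee b)=\sigma(a)\cup\sigma(b)$, $\sigma(1)=X$, $\sigma(ab)=\sigma(a)\cap\sigma(b)$. It is classifying if $X$ is spectral (i.e. $T_0$, quasi-compact, quasi-compact opens closed under finite intersections and forming a basis, every non-empty irreducible closed set has a generic point) and the assignments $a\mapsto\bigcup_{b\leq a,\ b\text{ compact}}\sigma(b)$ and $Y\mapsto\bigvee_{b\text{ compact},\,\sigma(b)\subseteq Y}b$ induce mutually inverse bijections between the semi-prime elements of $L$ and the subsets $Y\subseteq X$ of the form $Y=\bigcup_i Y_i$ with each $X\setminus Y_i$ quasi-compact open. *)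

(* Defs.v *)
From HB Require Import structures.
From mathcomp Require Import all_boot all_order.
From mathcomp Require Import boolp classical_sets functions cardinality topology.

Set Implicit Arguments.
Unset Strict Implicit.
Unset Printing Implicit Defensive.

Local Open Scope classical_set_scope.

Section IdealLattice.
Variables (L : Type) (le : L -> L -> Prop) (mul : L -> L -> L)
  (sup : set L -> L).

Definition is_lub (A : set L) (s : L) :=
  (forall a, A a -> le a s) /\ (forall u, (forall a, A a -> le a u) -> le s u).

Definition ljoin (a b : L) : L := sup [set x | x = a \/ x = b].

Definition ltop : L := sup setT.

Definition lcompact (a : L) :=
  forall A : set L, le a (sup A) ->
    exists A' : set L, [/\ finite_set A', A' `<=` A & le a (sup A')].

Record ideal_lattice : Prop := IdealLattice {
  il_refl : forall a, le a a;
  il_trans : forall a b c, le a b -> le b c -> le a c;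
  il_antisym : forall a b, le a b -> le b a -> a = b;
  il_mulA : forall a b c, mul a (mul b c) = mul (mul a b) c;
  il_sup : forall A : set L, is_lub A (sup A);
  il_algebraic : forall a, exists A : set L,
      (forall b, A b -> lcompact b) /\ a = sup A;
  il_mulDr : forall a b c, mul a (ljoin b c) = ljoin (mul a b) (mul a c);
  il_mulDl : forall a b c, mul (ljoin a b) c = ljoin (mul a c) (mul b c);
  il_top_compact : lcompact ltop;
  il_mul1l : forall a, mul ltop a = a;
  il_mulr1 : forall a, mul a ltop = a;
  il_mul_compact : forall a b, lcompact a -> lcompact b -> lcompact (mul a b)
}.

Definition semiprime (a : L) := forall b, le (mul b b) a -> le b a.

(* support datum (X, sigma); sigma is only constrained on compact elements *)
Definition support_datum (X : topologicalType) (sigma : L -> set X) :=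
  [/\ forall a, lcompact a -> closed (sigma a),
      forall a b, lcompact a -> lcompact b ->
        sigma (ljoin a b) = sigma a `|` sigma b,
      sigma ltop = setT &
      forall a b, lcompact a -> lcompact b ->
        sigma (mul a b) = sigma a `&` sigma b].

Definition support_morphism (X X' : topologicalType) (sigma : L -> set X)
  (sigma' : L -> set X') (f : X -> X') :=
  continuous f /\ forall a, lcompact a -> sigma a = f @^-1` (sigma' a).

Definition thomason_subset (X : topologicalType) (Y : set X) :=
  exists F : set (set X),
    (forall Z, F Z -> open (~` Z) /\ compact (~` Z)) /\
    Y = \bigcup_(Z in F) Z.

Definition classif_phi (X : topologicalType) (sigma : L -> set X) (a : L)
  : set X :=
  \bigcup_(b in [set b | lcompact b /\ le b a]) sigma b.

Definition classif_psi (X : topologicalType) (sigma : L -> set X) (Y : set X)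
  : L := sup [set b | lcompact b /\ sigma b `<=` Y].

End IdealLattice.

Definition irreducible_set (X : topologicalType) (Z : set X) :=
  Z !=set0 /\
  forall Z1 Z2 : set X, closed Z1 -> closed Z2 -> Z `<=` Z1 `|` Z2 ->
    Z `<=` Z1 \/ Z `<=` Z2.

Definition spectral_space (X : topologicalType) :=
  [/\ @kolmogorov_space X,
      compact [set: X],
      (forall U V : set X, open U -> compact U -> open V -> compact V ->
          compact (U `&` V)),
      (forall U : set X, open U -> forall x, U x ->
          exists V : set X, [/\ open V, compact V, V x & V `<=` U]) &
      (forall Z : set X, closed Z -> irreducible_set Z ->
          exists x : X, closure [set x] = Z)].

Definition classifying (L : Type) (le : L -> L -> Prop) (mul : L -> L -> L)
  (sup : set L -> L) (X : topologicalType) (sigma : L -> set X) :=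
  [/\ spectral_space X,
      (forall a, semiprime le mul a ->
          thomason_subset (classif_phi le sup sigma a)),
      (forall Y, thomason_subset Y ->
          semiprime le mul (classif_psi le sup sigma Y)),
      (forall a, semiprime le mul a ->
          classif_psi le sup sigma (classif_phi le sup sigma a) = a) &
      (forall Y, thomason_subset Y ->
          classif_phi le sup sigma (classif_psi le sup sigma Y) = Y)].

Definition homeomorphism (X X' : topologicalType) (f : X -> X') :=
  exists g : X' -> X,
    [/\ cancel f g, cancel g f, continuous f & continuous g].

(* Main.v *)
Require Import Defs.
From mathcomp Require Import all_boot boolp classical_sets topology.
Set Implicit Arguments.
Unset Strict Implicit.
Unset Printing Implicit Defensive.
Local Open Scope classical_set_scope.

Lemma compact_union_closed (X : topologicalType) (A : set X) (Fam : set (set X)) (Q : set X -> Prop) :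
  compact A -> (forall W, Fam W -> open W) -> A `<=` \bigcup_(W in Fam) W ->
  Q set0 -> (forall U W, Q U -> Q W -> Q (U `|` W)) -> (forall W, Fam W -> Q W) ->
  exists B, Q B /\ A `<=` B.
Proof.
move=> cA oF AF Q0 QU QF.
apply: contrapT => nB.
pose F : set_system X := [set S | exists B, Q B /\ A `\` B `<=` S].
have PF : ProperFilter F.
  split.
    move=> [B [QB HB]]; apply: nB; exists B; split=> // x Ax.
    by apply: contrapT => nBx; apply: (HB x).
  split.
  - by exists set0; split.
  - move=> S1 S2 [B1 [Q1 H1]] [B2 [Q2 H2]]; exists (B1 `|` B2); split; first exact: QU.
    move=> x [Ax nx]; split.
      by apply: H1; split=> // ?; apply: nx; left.
    by apply: H2; split=> // ?; apply: nx; right.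
  - by move=> P R PR [B [QB HB]]; exists B; split=> //; apply: subset_trans PR.
have [p [Ap cp]] := cA F PF (ex_intro _ set0 (conj Q0 (fun x H => proj1 H))).
have [W FW Wp] := AF p Ap.
have : F (A `\` W) by exists W; split=> //; exact: QF.
move=> FAW.
have nW : nbhs p W by apply: open_nbhs_nbhs; split=> //; exact: oF.
by have [x [[_ nWx] Wx]] := cp _ _ FAW nW.
Qed.

Lemma nsub (T : Type) (A B : set T) : ~ A `<=` B -> exists x, A x /\ ~ B x.
Proof.
move=> nAB; apply: contrapT => nE; apply: nAB => x Ax; apply: contrapT => nBx.
by apply: nE; exists x.
Qed.

Definition qco (X : topologicalType) (U : set X) := open U /\ compact U.
Definition qcc (X : topologicalType) (Z : set X) := open (~` Z) /\ compact (~` Z).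

Lemma closure1_sub (X : topologicalType) (C : set X) x : closed C -> C x -> closure [set x] `<=` C.
Proof.
move=> cC Cx; rewrite (closure_id C).1 //; apply: closureS => y ->; exact: Cx.
Qed.

Lemma qcoU (X : topologicalType) (U W : set X) : qco U -> qco W -> qco (U `|` W).
Proof. by move=> [? ?] [? ?]; split; [apply: openU|apply: compactU]. Qed.

Lemma sober_point (X : topologicalType) (HS : spectral_space X) (P : set X -> Prop)
 (Pqco : forall U, P U -> qco U)
 (Pup : forall U W, P U -> U `<=` W -> qco W -> P W)
 (PI : forall U W, P U -> P W -> P (U `&` W))
 (Pprime : forall U W, qco U -> qco W -> P (U `|` W) -> P U \/ P W)
 (PT : P setT) (P0 : ~ P set0) :
 exists x, forall U, qco U -> (U x <-> P U).
Proof.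
case: HS => _ cT qI qB gen.
pose N := \bigcup_(W in [set W | qco W /\ ~ P W]) W.
have K : forall W, qco W -> W `<=` N -> ~ P W.
  move=> W [oW cW] WN PW.
  have QU : forall U V, qco U /\ ~ P U -> qco V /\ ~ P V -> qco (U `|` V) /\ ~ P (U `|` V).
    move=> U V [qU nU] [qV nV]; split; first exact: qcoU.
    by move=> /(Pprime _ _ qU qV) [].
  have [B [[qcB nPB] WB]] := @compact_union_closed X W [set W | qco W /\ ~ P W]
    (fun B => qco B /\ ~ P B) cW (fun W H => proj1 (proj1 H)) WN
    (conj (conj open0 compact0) P0) QU (fun V H => H).
  by apply: nPB; apply: Pup PW WB qcB.
have oN : open N by apply: bigcup_open => W [[]].
pose Z := ~` N.
have cZ : closed Z by apply: open_closedC.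
have Zne : Z !=set0.
  apply: contrapT => nZ; apply: (K setT) => //; first by split; [exact: openT|].
  move=> y _; apply: contrapT => nNy; apply: nZ; by exists y.
have irrZ : irreducible_set Z.
  split=> // Z1 Z2 cZ1 cZ2 ZZ.
  apply: contrapT => /not_orP [/nsub [z1 [Zz1 nz1]] /nsub [z2 [Zz2 nz2]]].
  have [V1 [oV1 cV1 V1z V1s]] := qB _ (closed_openC cZ1) _ nz1.
  have [V2 [oV2 cV2 V2z V2s]] := qB _ (closed_openC cZ2) _ nz2.
  have PV : forall V z, qco V -> V z -> Z z -> P V.
    move=> V z qV Vz Zz; apply: contrapT => nPV; apply: Zz; by exists V.
  have P1 := PV _ _ (conj oV1 cV1) V1z Zz1.
  have P2 := PV _ _ (conj oV2 cV2) V2z Zz2.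
  apply: (K (V1 `&` V2)); last exact: PI.
    by split; [apply: openI|apply: qI].
  move=> w [w1 w2]; apply: contrapT => nNw.
  by case: (ZZ w nNw) => [/(V1s w w1)|/(V2s w w2)].
have [x clx] := gen Z cZ irrZ.
have Zx : Z x by rewrite -clx; apply: subset_closure.
exists x => U qU; split.
  move=> Ux; apply: contrapT => nPU; apply: Zx; by exists U.
move=> PU; apply: contrapT => nUx.
apply: (K U qU) => // w Uw; apply: contrapT => nNw.
have : closure [set x] `<=` ~` U.
  by apply: closure1_sub => //; apply: open_closedC; exact: qU.1.
by rewrite clx => /(_ w nNw).
Qed.

Lemma qcc0 (X : topologicalType) (HS : spectral_space X) : qcc (set0 : set X).
Proof. by case: HS => _ cT _ _ _; rewrite /qcc setC0; split=> //; exact: openT. Qed.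

Lemma qccU (X : topologicalType) (HS : spectral_space X) (A B : set X) :
  qcc A -> qcc B -> qcc (A `|` B).
Proof.
case: HS => _ _ qI _ _ [oA cA] [oB cB]; rewrite /qcc setCU; split; first exact: openI.
exact: qI.
Qed.

Lemma qcoI (X : topologicalType) (HS : spectral_space X) (A B : set X) :
  qco A -> qco B -> qco (A `&` B).
Proof.
case: HS => _ _ qI _ _ [oA cA] [oB cB]; split; first exact: openI.
exact: qI.
Qed.

Lemma qcoT (X : topologicalType) (HS : spectral_space X) : qco (setT : set X).
Proof. by case: HS => _ cT _ _ _; split=> //; exact: openT. Qed.

Lemma hochster (X : topologicalType) (HS : spectral_space X) (D : set X)
  (Cs : set (set X)) (G : set X -> Prop) :
  qcc D -> (forall E, Cs E -> qcc E) -> D `<=` \bigcup_(E in Cs) E ->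
  G set0 -> (forall A B, G A -> G B -> G (A `|` B)) -> (forall E, Cs E -> G E) ->
  exists E, G E /\ D `<=` E.
Proof.
move=> qD qCs DC G0 GU GC.
apply: contrapT => nE.
pose F0 := [set W | qco W /\ exists E, [/\ G E, qcc E & ~` E `<=` W]].
pose good (F : set (set X)) := [/\ (forall W, F W -> qco W), F0 `<=` F,
   (forall U W, F U -> U `<=` W -> qco W -> F W),
   (forall U W, F U -> F W -> F (U `&` W)) & ~ F (~` D)].
have F0T : F0 setT.
  split; first exact: qcoT.
  by exists set0; split=> //; exact: qcc0.
have gF0 : good F0.
  split=> //.
  - by move=> W [].
  - by move=> U W [_ [E [GE qE EU]]] UW qW; split=> //; exists E; split=> //; apply: subset_trans UW.
  - move=> U W [qU [E1 [G1 q1 E1U]]] [qW [E2 [G2 q2 E2W]]]; split; first exact: qcoI.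
    exists (E1 `|` E2); split; [exact: GU|exact: qccU|].
    by rewrite setCU; apply: setISS.
  - move=> [_ [E [GE qE ED]]]; apply: nE; exists E; split=> //.
    by move=> x Dx; apply: contrapT => nEx; apply: (ED x nEx).
pose PP := fun F : set (set X) => F = set0 \/ good F.
have [|M [PM maxM]] := @Zorn_bigcup _ PP.
  move=> Ch ChP tot.
  have [[F1 ChF1 gF1]|nF] := pselect (exists2 F, Ch F & good F); last first.
    left; apply/seteqP; split=> // W [F ChF FW].
    case: (ChP F ChF) => [F0e|gF]; first by rewrite F0e in FW.
    by exfalso; apply: nF; exists F.
  right.
  have gCh : forall F W, Ch F -> F W -> good F.
    by move=> F W ChF FW; case: (ChP F ChF) => // F0e; rewrite F0e in FW.
  case: gF1 => q1 s1 u1 i1 n1.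
  split.
  - by move=> W [F ChF FW]; case: (gCh F W ChF FW) => qF _ _ _ _; exact: qF.
  - by move=> W /s1 FW; exists F1.
  - move=> U W [F ChF FU] UW qW; exists F => //.
    by case: (gCh F U ChF FU) => _ _ uF _ _; exact: uF FU UW qW.
  - move=> U W [Fa Cha FaU] [Fb Chb FbW].
    case: (tot _ _ Cha Chb) => [ab|ba].
      exists Fb => //; case: (gCh Fb W Chb FbW) => _ _ _ iF _; apply: iF => //; exact: ab.
    exists Fa => //; case: (gCh Fa U Cha FaU) => _ _ _ iF _; apply: iF => //; exact: ba.
  - move=> [F ChF FD]; by case: (gCh F _ ChF FD) => _ _ _ _ nF'; apply: nF'.
have gM : good M.
  case: PM => // M0; exfalso; apply: (maxM F0); last by right.
  rewrite M0; split=> // /(_ setT F0T) //.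
case: gM => qM sM uM iM nM.
have MT : M setT by apply: sM.
have prime : forall U W, qco U -> qco W -> M (U `|` W) -> M U \/ M W.
  move=> U W qU qW MUW; apply: contrapT => /not_orP [nU nW].
  have key : forall V, qco V -> ~ M V -> exists m, M m /\ m `&` V `<=` ~` D.
    move=> V qV nV; apply: contrapT => nex.
    pose MV := [set Z | qco Z /\ exists m, M m /\ m `&` V `<=` Z].
    apply: (maxM MV); last first.
      right; split.
      - by move=> Z [].
      - move=> Z /sM MZ; split; first exact: qM.
        by exists Z; split=> // ? [].
      - move=> Z1 Z2 [_ [m [Mm mZ]]] ZZ qZ2; split=> //; exists m; split=> //.
        exact: subset_trans ZZ.
      - move=> Z1 Z2 [q1 [m1 [M1 s1']]] [q2 [m2 [M2 s2']]]; split; first exact: qcoI.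
        exists (m1 `&` m2); split; first exact: iM.
        move=> y [[y1 y2] yV]; split; [apply: s1'|apply: s2']; by split.
      - move=> [_ [m [Mm mD]]]; apply: nex; by exists m.
    split.
      move=> Z MZ; split; first exact: qM.
      by exists Z; split=> // ? [].
    move=> MVM; apply: nV; apply: MVM; split=> //; exists setT; split=> // ? [].
  have [m1 [M1 s1']] := key U qU nU.
  have [m2 [M2 s2']] := key W qW nW.
  apply: nM; apply: (uM (m1 `&` m2 `&` (U `|` W))).
  - by apply: (iM) => //; exact: (iM).
  - move=> y [[y1 y2] [yU|yW]]; [apply: s1'|apply: s2']; by split.
  - by case: qD.
have [|x Hx] := @sober_point X HS M qM uM iM prime MT.
  move=> M0; apply: nM; apply: uM M0 _ _ => //; by case: qD.
have Dx : D x.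
  apply: contrapT => nDx; apply: nM; apply/(Hx _ _).1 => //; by case: qD.
have [E CE Ex] := DC x Dx.
have qE := qCs E CE.
have : M (~` E).
  apply: sM; split; first by case: qE.
  by exists E; split=> //; exact: GC.
by move/(Hx _ _).2 => /(_ qE) /(_ Ex).
Qed.

Lemma thP (X : topologicalType) (T : set X) :
  thomason_subset T <-> (forall x, T x -> exists Z, [/\ qcc Z, Z `<=` T & Z x]).
Proof.
split.
  move=> [F [HF ->]] x [Z FZ Zx]; exists Z; split=> //; first exact: HF.
  by move=> y Zy; exists Z.
move=> H; exists [set Z | qcc Z /\ Z `<=` T]; split; first by move=> Z [].
apply/seteqP; split.
  by move=> x /H [Z [qZ ZT Zx]]; exists Z.
by move=> x [Z [_ ZT] Zx]; exact: ZT.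
Qed.

Lemma th_qcc (X : topologicalType) (Z : set X) : qcc Z -> thomason_subset Z.
Proof. by move=> qZ; apply: (proj2 (thP _)) => x Zx; exists Z; split. Qed.

Lemma th_bigcup (X : topologicalType) (S : set (set X)) :
  (forall T, S T -> thomason_subset T) -> thomason_subset (\bigcup_(T in S) T).
Proof.
move=> HS; apply: (proj2 (thP _)) => x [T ST Tx].
have [Z [qZ ZT Zx]] := (thP T).1 (HS T ST) x Tx.
exists Z; split=> // y Zy; exists T => //; exact: ZT.
Qed.

Lemma thU (X : topologicalType) (A B : set X) :
  thomason_subset A -> thomason_subset B -> thomason_subset (A `|` B).
Proof.
move=> /thP HA /thP HB; apply: (proj2 (thP _)) => x [/HA|/HB] [Z [qZ ZT Zx]].
  by exists Z; split=> // y /ZT; left.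
by exists Z; split=> // y /ZT; right.
Qed.

Lemma thI (X : topologicalType) (HS : spectral_space X) (A B : set X) :
  thomason_subset A -> thomason_subset B -> thomason_subset (A `&` B).
Proof.
move=> /thP HA /thP HB; apply: (proj2 (thP _)) => x [/HA [Z1 [q1 s1 x1]] /HB [Z2 [q2 s2 x2]]].
exists (Z1 `&` Z2); split=> //.
  rewrite /qcc setCI; apply: qcoU; [exact: q1|exact: q2].
by move=> y [y1 y2]; split; [apply: s1|apply: s2].
Qed.

Lemma th0 (X : topologicalType) (HS : spectral_space X) : thomason_subset (set0 : set X).
Proof. by apply: th_qcc; exact: qcc0. Qed.

Lemma thT (X : topologicalType) (HS : spectral_space X) : thomason_subset (setT : set X).
Proof. by apply: th_qcc; rewrite /qcc setCT; split; [exact: open0|exact: compact0]. Qed.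

Lemma qcoC (X : topologicalType) (U : set X) : qco U -> qcc (~` U).
Proof. by rewrite /qcc setCK. Qed.

Lemma same_qco_eq (X : topologicalType) (HS : spectral_space X) (x y : X) :
  (forall U, qco U -> U x -> U y) -> (forall U, qco U -> U y -> U x) -> x = y.
Proof.
case: HS => T0 _ _ qB _ Hxy Hyx.
case: (eqVneq x y) => // /T0 [A [[nA yA]|[nA xA]]].
  move: nA yA; rewrite !inE /= => nA yA.
  move: nA; rewrite nbhsE => -[B [oB Bx] BA].
  have [V [oV cV Vx VB]] := qB B oB x Bx.
  by exfalso; apply: yA; apply: BA; apply: VB; apply: Hxy.
move: nA xA; rewrite !inE /= => nA xA.
move: nA; rewrite nbhsE => -[B [oB By] BA].
have [V [oV cV Vy VB]] := qB B oB y By.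
by exfalso; apply: xA; apply: BA; apply: VB; apply: Hyx.
Qed.

Theorem mainTheorem10 (L : Type) (le : L -> L -> Prop) (mul : L -> L -> L)
  (sup : set L -> L) (HL : ideal_lattice le mul sup)
  (X X' : topologicalType) (sigma : L -> set X) (sigma' : L -> set X')
  (HX : support_datum le mul sup sigma) (HX' : support_datum le mul sup sigma')
  (f : X -> X') (Hf : support_morphism le sup sigma sigma' f)
  (HC : classifying le mul sup sigma) (HC' : classifying le mul sup sigma') :
  homeomorphism f.
Proof.
case: Hf => fc fs.
case: (HC) => HS phiT psiS psiphi phipsi.
case: (HC') => HS' phiT' psiS' psiphi' phipsi'.
have phipre : forall a, classif_phi le sup sigma a = f @^-1` classif_phi le sup sigma' a.
  move=> a; rewrite /classif_phi preimage_bigcup; apply: eq_bigcupr => b [cb _].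
  exact: fs.
have corr_ex : forall T, thomason_subset T ->
    exists T', thomason_subset T' /\ f @^-1` T' = T.
  move=> T ThT; set a := classif_psi le sup sigma T.
  exists (classif_phi le sup sigma' a); split; first exact/phiT'/psiS.
  by rewrite -phipre phipsi.
have pre_th : forall T', thomason_subset T' -> thomason_subset (f @^-1` T').
  move=> T' ThT'; rewrite -(phipsi' _ ThT') -phipre; exact/phiT/psiS'.
have corr_inj : forall A B, thomason_subset A -> thomason_subset B ->
    f @^-1` A = f @^-1` B -> A = B.
  move=> A B ThA ThB AB.
  have sa := psiS' _ ThA; have sb := psiS' _ ThB.
  rewrite -(phipsi' _ ThA) -(phipsi' _ ThB).
  congr (classif_phi _ _ _ _).
  rewrite -(psiphi _ sa) -(psiphi _ sb) !phipre.
  by rewrite (phipsi' _ ThA) (phipsi' _ ThB) AB.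
have corr_le : forall A B, thomason_subset A -> thomason_subset B ->
    f @^-1` A `<=` f @^-1` B -> A `<=` B.
  move=> A B ThA ThB AB.
  have -> : B = A `|` B.
    apply: corr_inj => //; first exact: thU.
    by rewrite preimage_setU; apply/seteqP; split=> [x Bx|x [/AB|]]; [right|..].
  by move=> x Ax; left.
have ptE : forall (A : set X) (B : set X') x, f @^-1` B = A -> B (f x) = A x.
  by move=> A B x <-.
have finj : forall x1 x2, f x1 = f x2 -> x1 = x2.
  move=> x1 x2 e; apply: (same_qco_eq HS) => U qU.
    have [T' [ThT' E]] := corr_ex _ (th_qcc (qcoC qU)).
    move=> Ux; apply: contrapT => nUx.
    have : T' (f x2) by rewrite (ptE _ _ _ E).
    by rewrite -e (ptE _ _ _ E).
  have [T' [ThT' E]] := corr_ex _ (th_qcc (qcoC qU)).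
  move=> Ux; apply: contrapT => nUx.
  have : T' (f x1) by rewrite (ptE _ _ _ E).
  by rewrite e (ptE _ _ _ E).
have fsurj : forall y, exists x, f x = y.
  move=> y.
  pose P := fun U : set X => qco U /\ exists T', [/\ thomason_subset T', f @^-1` T' = ~` U & ~ T' y].
  have Pq : forall U, P U -> qco U by move=> U [].
  have Pup : forall U W, P U -> U `<=` W -> qco W -> P W.
    move=> U W [qU [TU [ThU EU nU]]] UW qW; split=> //.
    have [TW [ThW EW]] := corr_ex _ (th_qcc (qcoC qW)).
    exists TW; split=> // TWy; apply: nU.
    apply: (corr_le TW TU) => //.
    by rewrite EU EW => z nWz Uz; apply: nWz; apply: UW.
  have PI : forall U W, P U -> P W -> P (U `&` W).
    move=> U W [qU [TU [ThU EU nU]]] [qW [TW [ThW EW nW]]]; split; first exact: qcoI.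
    exists (TU `|` TW); split; first exact: thU.
      by rewrite preimage_setU EU EW setCI.
    by case.
  have Ppr : forall U W, qco U -> qco W -> P (U `|` W) -> P U \/ P W.
    move=> U W qU qW [_ [T [ThT E nT]]].
    have [TU [ThU EU]] := corr_ex _ (th_qcc (qcoC qU)).
    have [TW [ThW EW]] := corr_ex _ (th_qcc (qcoC qW)).
    have e : TU `&` TW = T.
      apply: corr_inj => //; first exact: thI.
      by rewrite preimage_setI EU EW E setCU.
    apply: contrapT => /not_orP [nPU nPW].
    apply: nT; rewrite -e; split.
      apply: contrapT => nTU; apply: nPU; split=> //; by exists TU.
    apply: contrapT => nTW; apply: nPW; split=> //; by exists TW.
  have PT : P setT.
    split; first exact: qcoT.
    exists set0; split; [exact: th0|by rewrite preimage_set0 setCT|by []].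
  have P0 : ~ P set0.
    move=> [_ [T [ThT E nT]]]; apply: nT.
    have -> : T = setT.
      apply: corr_inj => //; first exact: thT.
      by rewrite E setC0 preimage_setT.
    by [].
  have [x Hx] := @sober_point X HS P Pq Pup PI Ppr PT P0.
  exists x.
  have key : forall C', thomason_subset C' -> (C' (f x) <-> C' y).
    move=> C' ThC'.
    have ThT := pre_th _ ThC'.
    split.
      move=> /(proj1 (thP _) ThT) [Z [qZ ZT Zx]].
      have [T'' [Th'' E'']] := corr_ex _ (th_qcc qZ).
      have T''y : T'' y.
        apply: contrapT => nT''.
        have qU : qco (~` Z) by move: qZ; rewrite /qcc.
        have PU : P (~` Z) by split=> //; exists T''; split=> //; rewrite setCK.
        exact: (proj2 (Hx _ qU) PU Zx).
      apply: (corr_le T'' C') => //; by rewrite E''.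
    move=> C'y; apply: contrapT => nC'fx.
    pose S' := [set T'' | thomason_subset T'' /\ exists Z, [/\ qcc Z, Z `<=` f @^-1` C' & f @^-1` T'' = Z]].
    have eU : \bigcup_(T in S') T = C'.
      apply: corr_inj => //.
        by apply: th_bigcup => T [].
      rewrite preimage_bigcup; apply/seteqP; split.
        by move=> z [T [_ [Z [_ ZC ET]]]]; rewrite ET => /ZC.
      move=> z /(proj1 (thP _) ThT) [Z [qZ ZT Zz]].
      have [T'' [Th'' E'']] := corr_ex _ (th_qcc qZ).
      exists T''; first by split=> //; exists Z.
      by rewrite /= (ptE _ _ _ E'').
    move: C'y; rewrite -eU => -[T'' [Th'' [Z [qZ ZC E'']]] T''y].
    have qU : qco (~` Z) by move: qZ; rewrite /qcc.
    have nZx : ~ Z x by move=> /ZC.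
    have [_ [T3 [Th3 E3 nT3]]] := proj1 (Hx _ qU) nZx.
    apply: nT3; have -> : T3 = T''; last by [].
    apply: corr_inj => //; by rewrite E3 E'' setCK.
  apply: (same_qco_eq HS') => W qW.
    move=> Wfx; apply: contrapT => nWy.
    have : (~` W) y by [].
    by move/(proj2 (key _ (th_qcc (qcoC qW)))).
  move=> Wy; apply: contrapT => nWfx.
  have : (~` W) (f x) by [].
  by move/(proj1 (key _ (th_qcc (qcoC qW)))).
have [g fg] := choice fsurj.
have gf : cancel f g by move=> x; apply: finj; rewrite fg.
exists g; split=> //.
case: (HS) => _ _ _ qB _.
apply/continuousP => A oA; rewrite openE => y Agy.
rewrite /interior nbhsE /=.
have [V [oV cV Vx VA]] := qB A oA (g y) Agy.
have qD : qcc (~` V) by rewrite /qcc setCK.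
have [TD [ThD ED]] := corr_ex _ (th_qcc qD).
have nTDy : ~ TD y.
  by rewrite -(fg y) (ptE _ _ _ ED) /= => /(_ Vx).
pose G := fun E : set X => exists C', [/\ qcc C', C' `<=` TD & E `<=` f @^-1` C'].
pose Cs := [set E : set X | qcc E /\ G E].
have DC : ~` V `<=` \bigcup_(E in Cs) E.
  move=> d nVd.
  have : TD (f d) by rewrite (ptE _ _ _ ED).
  move=> /(proj1 (thP _) ThD) [E' [qE' E'TD E'fd]].
  have ThE := pre_th _ (th_qcc qE').
  have [E [qE EE' Ed]] := proj1 (thP _) ThE d E'fd.
  exists E => //; split=> //; exists E'; split=> //.
have G0 : G set0 by exists set0; split; [exact: qcc0|by []|by []].
have GU : forall A1 B1, G A1 -> G B1 -> G (A1 `|` B1).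
  move=> A1 B1 [C1 [q1 s1 e1]] [C2 [q2 s2 e2]]; exists (C1 `|` C2); split.
  + exact: qccU.
  + by move=> z [/s1|/s2].
  + by move=> z [/e1|/e2] /=; [left|right].
have [E [[C' [qC' C'TD EC']] DE]] := @hochster X HS (~` V) Cs G qD (fun E H => proj1 H) DC G0 GU (fun E H => proj2 H).
exists (~` C'); first split.
- by case: qC'.
- by move=> /C'TD.
move=> w nC'w; apply: VA; apply: contrapT => nV.
by apply: nC'w; rewrite -(fg w); apply: EC'; apply: DE.
Qed.
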